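(* Let $P\ge 1$, $U\ge 0$ and $L$ be integers with $L\leq -\frac{U+1}{2}$, and let $B_{\mathrm{OFL}}:=(1-2^{-P})\,2^{U+1}$. Then for every real $\nu\geq 0$ and every real $z$ with $0<z\leq B_{\mathrm{OFL}}$, the exponentially scaled function satisfies $\tilde K_\nu(z)\geq 2^{L}$ (i.e. $\tilde K_\nu(z)$ does not underflow the smallest positive normal floating-point number $2^L$). *)

(* Defs.v *)
From Stdlib Require Import Reals.
From Coquelicot Require Import Coquelicot.
Open Scope R_scope.

(* Modified Bessel function of the second kind, for real order nu and z > 0,
   via the standard integral representation (DLMF 10.32.9):
     K_nu(z) = \int_0^oo exp(-z cosh t) cosh(nu t) dt. *)
Definition BesselK (nu z : R) : R :=
  RInt_gen (fun t => exp (- z * cosh t) * cosh (nu * t))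
           (at_point 0) (Rbar_locally p_infty).

Definition BesselK_scaled (nu z : R) : R := exp z * BesselK nu z.

Definition B_OFL (P U : Z) : R :=
  (1 - powerRZ 2 (- P)) * powerRZ 2 (U + 1).

(* Main.v *)
Require Import Defs.
From Stdlib Require Import Reals Lra Lia Psatz.
From Coquelicot Require Import Coquelicot.
Open Scope R_scope.

Definition kf (nu z : R) (t : R) : R := exp (- z * cosh t) * cosh (nu * t).

Lemma kf_cont nu z x : continuous (kf nu z) x.
Proof.
  apply (@ex_derive_continuous R_AbsRing R_NormedModule). unfold kf, cosh. auto_derive. auto.
Qed.

Lemma kf_ex nu z a b : ex_RInt (kf nu z) a b.
Proof. apply (@ex_RInt_continuous R_CompleteNormedModule). intros; apply kf_cont. Qed.

Lemma cosh_ge1 x : 1 <= cosh x.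
Proof.
  unfold cosh. assert (H := exp_pos x). rewrite exp_Ropp.
  assert (0 <= (exp x - 1)^2 / exp x).
  { apply Rdiv_le_0_compat. apply pow2_ge_0. lra. }
  replace ((exp x + / exp x)/2) with (1 + (exp x - 1)^2/exp x/2).
  lra. field. lra.
Qed.

Lemma kf_pos nu z t : 0 <= kf nu z t.
Proof.
  unfold kf. assert (H:=exp_pos (-z * cosh t)). assert (H1:=cosh_ge1 (nu*t)). nra.
Qed.

Lemma kf_bound nu z t : 0 <= nu -> 0 < z -> 0 <= t ->
  kf nu z t <= exp (2 * (nu+1)^2 / z) * exp (- t).
Proof.
  intros Hn Hz Ht. unfold kf.
  assert (Hc : cosh (nu * t) <= exp (nu * t)).
  { unfold cosh. assert (exp (- (nu*t)) <= exp (nu*t)).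
    { apply exp_le_3 || idtac. destruct (Req_dec (nu*t) 0) as [E|E].
      rewrite E, Ropp_0. lra. left. apply exp_increasing. nra. }
    lra. }
  assert (Hch : t^2/8 <= cosh t).
  { unfold cosh. assert (E: exp t = exp (t/2) * exp (t/2)) by (rewrite <- exp_plus; f_equal; lra).
    assert (H1 := exp_ineq1_le (t/2)). assert (H2 := exp_pos (-t)). nra. }
  rewrite <- exp_plus.
  apply Rle_trans with (exp (- z * cosh t) * exp (nu * t)).
  { apply Rmult_le_compat_l. left; apply exp_pos. exact Hc. }
  rewrite <- exp_plus. destruct (Req_dec (- z * cosh t + nu * t) (2 * (nu + 1) ^ 2 / z + - t)) as [E|E].
  rewrite E; lra. left. apply exp_increasing.
  assert (z * (- z * cosh t + nu * t) <= z * (2 * (nu + 1) ^ 2 / z + - t)).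
  { replace (z * (2 * (nu + 1) ^ 2 / z + - t)) with (2*(nu+1)^2 - z*t) by (field; lra).
    assert (0 <= (z*t - 4*(nu+1))^2) by apply pow2_ge_0. nra. }
  nra.
Qed.
Lemma F_mono nu z a b : 0 <= a <= b -> RInt (kf nu z) 0 a <= RInt (kf nu z) 0 b.
Proof.
  intros H. rewrite <- (RInt_Chasles (kf nu z) 0 a b) by apply kf_ex.
  assert (0 <= RInt (kf nu z) a b).
  { apply RInt_ge_0. lra. apply kf_ex. intros; apply kf_pos. }
  change plus with Rplus. lra.
Qed.

Lemma F_bound nu z b : 0 <= nu -> 0 < z -> 0 <= b ->
  RInt (kf nu z) 0 b <= exp (2 * (nu+1)^2 / z).
Proof.
  intros Hn Hz Hb. set (C := exp (2 * (nu+1)^2 / z)).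
  assert (HI : is_RInt (fun t => C * exp (- t)) 0 b
                 (minus ((fun t => - C * exp (-t)) b) ((fun t => - C * exp (-t)) 0))).
  { apply (@is_RInt_derive R_CompleteNormedModule (fun t => - C * exp (-t)) (fun t => C * exp (-t))).
    - intros x _. auto_derive. auto. ring.
    - intros x _. apply (@ex_derive_continuous R_AbsRing R_NormedModule). auto_derive. auto. }
  apply Rle_trans with (RInt (fun t => C * exp (- t)) 0 b).
  - apply RInt_le. exact Hb. apply kf_ex. eexists; exact HI.
    intros x Hx. apply kf_bound; lra.
  - erewrite (is_RInt_unique _ _ _ _ HI). unfold minus, plus, opp; simpl.
    replace (- 0) with 0 by ring. rewrite exp_0. assert (0 < exp (-b)) by apply exp_pos.
    assert (0 < C) by apply exp_pos. nra.
Qed.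

Lemma kf_gen nu z : 0 <= nu -> 0 < z ->
  exists l, is_RInt_gen (kf nu z) (at_point 0) (Rbar_locally p_infty) l /\
     forall b, 0 <= b -> RInt (kf nu z) 0 b <= l.
Proof.
  intros Hn Hz.
  set (E := fun y => exists b, 0 <= b /\ y = RInt (kf nu z) 0 b).
  assert (HB : bound E).
  { exists (exp (2 * (nu+1)^2 / z)). intros y [b [Hb ->]]. apply F_bound; auto. }
  assert (HE : exists x, E x). { exists (RInt (kf nu z) 0 0). exists 0. split; auto; lra. }
  destruct (completeness E HB HE) as [l [Hub Hlub]].
  exists l. split.
  - intros P [eps HP].
    assert (Hex : exists b0, 0 <= b0 /\ l - eps < RInt (kf nu z) 0 b0).
    { apply Classical_Prop.NNPP. intros Hno.
      assert (l <= l - eps).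
      { apply Hlub. intros y [b [Hb ->]].
        apply Rnot_lt_le. intros Hlt. apply Hno. exists b. split; auto. }
      destruct eps; simpl in *; lra. }
    destruct Hex as [b0 [Hb0 Hlt]].
    exists (fun a => a = 0) (fun b => b0 < b).
    + reflexivity.
    + exists b0. auto.
    + intros a b -> Hb. exists (RInt (kf nu z) 0 b). split.
      * apply (@RInt_correct R_CompleteNormedModule). apply kf_ex.
      * apply HP. assert (H1 := F_mono nu z b0 b ltac:(lra)).
        assert (H2 : RInt (kf nu z) 0 b <= l). { apply Hub. exists b; split; auto; lra. }
        change (Rabs (RInt (kf nu z) 0 b - l) < eps). apply Rabs_def1; lra.
  - intros b Hb. apply Hub. exists b; auto.
Qed.

Lemma BesselK_ge nu z b : 0 <= nu -> 0 < z -> 0 <= b ->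
  RInt (kf nu z) 0 b <= BesselK nu z.
Proof.
  intros Hn Hz Hb. destruct (kf_gen nu z Hn Hz) as [l [Hl Hle]].
  unfold BesselK. replace (RInt_gen _ _ _) with l.
  apply Hle; auto.
  symmetry. apply (@is_RInt_gen_unique R_CompleteNormedModule); try exact Hl; try apply Proper_StrongProper; typeclasses eauto.
Qed.
Definition low (a : R) : R := (1 - (2 * (a - 1)^2 / a) / 16) ^ 16.
Fixpoint qsum (p : R) (l : list R) : R :=
  match l with nil => 0 | cons a l' => (1 - p / a) * low a + qsum a l' end.
Definition Agrid : list R := List.cons (53/50) (List.cons (57/50) (List.cons (61/50) (List.cons (13/10) (List.cons (69/50) (List.cons (37/25) (List.cons (79/50) (List.cons (42/25) (List.cons (9/5) (List.cons (48/25) (List.cons (51/25) (List.cons (109/50) (List.cons (58/25) (List.cons (62/25) (List.cons (66/25) (List.cons (141/50) nil))))))))))))))).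
Lemma qsum_num : 1/2 <= qsum 1 Agrid.
Proof. unfold qsum, Agrid, low. lra. Qed.
Fixpoint rsum (g : R -> R) (p : R) (l : list R) : R :=
  match l with nil => 0 | cons x l' => (x - p) * g x + rsum g x l' end.
Fixpoint sortedf (p : R) (l : list R) : Prop :=
  match l with nil => True | cons x l' => p <= x /\ sortedf x l' end.
Fixpoint allle (b : R) (l : list R) : Prop :=
  match l with nil => True | cons x l' => x <= b /\ allle b l' end.

Lemma cosh_mono a b : 0 <= a <= b -> cosh a <= cosh b.
Proof.
  intros H. unfold cosh. rewrite !exp_Ropp.
  assert (HA : 1 <= exp a). { assert (H1:=exp_ineq1_le a). lra. }
  assert (HAB : exp a <= exp b).
  { destruct (Req_dec a b) as [->|E]. lra. left. apply exp_increasing. lra. }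
  assert (/ exp b <= / exp a). { apply Rinv_le_contravar; lra. }
  assert (HP: 0 <= (exp b - exp a) * (1 - / (exp a * exp b))).
  { apply Rmult_le_pos. lra.
    assert (/ (exp a * exp b) <= 1). { rewrite <- Rinv_1. apply Rinv_le_contravar. lra. nra. }
    lra. }
  assert (E: (exp b + / exp b) / 2 - (exp a + / exp a) / 2 = (exp b - exp a) * (1 - / (exp a * exp b)) / 2).
  { field. split; apply Rgt_not_eq, exp_pos. }
  lra.
Qed.

Lemma rsum_RInt nu z : 0 <= nu -> 0 < z -> forall l p b, 0 <= p -> sortedf p l -> allle b l -> p <= b ->
  rsum (fun t => exp (- z * cosh t)) p l <= RInt (kf nu z) p b.
Proof.
  intros Hn Hz. induction l as [|x l IH]; intros p b Hp Hs Ha Hpb; simpl.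
  - apply RInt_ge_0. auto. apply kf_ex. intros; apply kf_pos.
  - destruct Hs as [Hpx Hs]. destruct Ha as [Hxb Ha].
    rewrite <- (RInt_Chasles (kf nu z) p x b) by apply kf_ex.
    change plus with Rplus.
    assert (H1 : (x - p) * exp (- z * cosh x) <= RInt (kf nu z) p x).
    { rewrite <- (Rmult_comm (exp (- z * cosh x))).
      replace ((exp (- z * cosh x)) * (x - p)) with (RInt (fun _ => exp (- z * cosh x)) p x).
      2:{ rewrite RInt_const. simpl. unfold scal; simpl. unfold mult; simpl. ring. }
      apply RInt_le. auto. apply ex_RInt_const. apply kf_ex.
      intros t Ht. unfold kf.
      assert (exp (- z * cosh x) <= exp (- z * cosh t)).
      { assert (cosh t <= cosh x) by (apply cosh_mono; lra).
        destruct (Req_dec (cosh t) (cosh x)) as [E|E]. rewrite E; lra.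
        left. apply exp_increasing. nra. }
      assert (H1:=cosh_ge1 (nu*t)). assert (H2 := exp_pos (- z * cosh t)). nra. }
    assert (H2 := IH x b ltac:(lra) Hs Ha Hxb). lra.
Qed.

Lemma rsum_scale c g p l : rsum (fun t => c * g t) p l = c * rsum g p l.
Proof. revert p; induction l as [|x l IH]; intros p; simpl. ring. rewrite IH. ring. Qed.

Lemma rsum_ext g1 g2 p l : (forall x, g1 x = g2 x) -> rsum g1 p l = rsum g2 p l.
Proof. intros H; revert p; induction l as [|x l IH]; intros p; simpl. ring. rewrite IH, H. ring. Qed.

Lemma rsum_mono g1 g2 l : forall p, 0 <= p -> sortedf p l -> (forall x, 0 <= x -> g1 x <= g2 x) ->
  rsum g1 p l <= rsum g2 p l.
Proof.
  induction l as [|x l IH]; intros p Hp Hs H; simpl. lra.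
  destruct Hs as [Hpx Hs]. assert (H1 := IH x ltac:(lra) Hs H).
  assert (H2 := H x ltac:(lra)). nra.
Qed.

Lemma rsum_map s g l : forall p, rsum g (s * p) (List.map (fun y => s * y) l) = s * rsum (fun y => g (s * y)) p l.
Proof. induction l as [|x l IH]; intros p; simpl. ring. rewrite IH. ring. Qed.

Lemma sortedf_map s l : 0 <= s -> forall p, sortedf p l -> sortedf (s * p) (List.map (fun y => s * y) l).
Proof. intros Hs; induction l as [|x l IH]; intros p H; simpl; auto. destruct H as [H1 H2]. split. nra. apply IH; auto. Qed.

Lemma allle_map s l b : 0 <= s -> allle b l -> allle (s * b) (List.map (fun y => s * y) l).
Proof. intros Hs; induction l as [|x l IH]; simpl; auto. intros [H1 H2]. split. nra. auto. Qed.
Lemma exp_pow_n n x : exp x ^ n = exp (INR n * x).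
Proof.
  induction n as [|n IH]. simpl. rewrite Rmult_0_l, exp_0. ring.
  rewrite S_INR. simpl. rewrite IH, <- exp_plus. f_equal. ring.
Qed.

Lemma low_le a : 1 <= a <= 3 -> low a <= exp (- 4 * (cosh (ln a) - 1)).
Proof.
  intros H. set (w := 2 * (a - 1)^2 / a).
  assert (Hw : 0 <= w <= 16).
  { unfold w. split. apply Rdiv_le_0_compat. apply Rmult_le_pos. lra. apply pow2_ge_0. lra.
    apply Rmult_le_reg_r with a. lra. unfold Rdiv. rewrite Rmult_assoc, Rinv_l by lra. nra. }
  assert (E : - 4 * (cosh (ln a) - 1) = INR 16 * (- w / 16)).
  { unfold cosh. rewrite exp_Ropp, exp_ln by lra. unfold w. simpl INR. field. lra. }
  rewrite E, <- exp_pow_n. unfold low. fold w. apply pow_incr. split. lra.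
  assert (H1 := exp_ineq1_le (- w / 16)). lra.
Qed.

Lemma term_le p a : 1 <= p <= a -> a <= 3 ->
  (1 - p / a) * low a <= (ln a - ln p) * exp (- 4 * (cosh (ln a) - 1)).
Proof.
  intros H1 H2.
  assert (Hl : 1 - p / a <= ln a - ln p).
  { assert (H := exp_ineq1_le (ln (p / a))). rewrite exp_ln in H.
    rewrite ln_div in H by lra. lra. apply Rdiv_lt_0_compat; lra. }
  assert (H0 : 0 <= 1 - p / a).
  { assert (p / a <= 1). { apply Rmult_le_reg_r with a. lra. unfold Rdiv. rewrite Rmult_assoc, Rinv_l by lra. lra. } lra. }
  assert (Hlow : 0 <= low a). { unfold low. rewrite <- pow2_abs_ge_0 || idtac.
    replace 16%nat with (2*8)%nat by reflexivity. rewrite pow_mult. apply pow_le. apply pow2_ge_0. }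
  assert (H3 := low_le a ltac:(lra)).
  apply Rmult_le_compat; auto.
Qed.

Fixpoint good (p : R) (l : list R) : Prop :=
  match l with nil => True | cons a l' => p <= a /\ a <= 3 /\ good a l' end.

Definition g4 (y : R) := exp (- 4 * (cosh y - 1)).

Lemma qsum_rsum l : forall p, 1 <= p -> good p l ->
  qsum p l <= rsum g4 (ln p) (List.map ln l).
Proof.
  induction l as [|a l IH]; intros p Hp Hg; simpl. lra.
  destruct Hg as [H1 [H2 H3]]. assert (H := term_le p a ltac:(lra) H2).
  assert (IH' := IH a ltac:(lra) H3). apply Rplus_le_compat; [exact H | exact IH'].
Qed.

Lemma good_sorted l : forall p, 1 <= p -> good p l -> sortedf (ln p) (List.map ln l) /\ allle 2 (List.map ln l).
Proof.
  induction l as [|a l IH]; intros p Hp Hg; simpl. auto.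
  destruct Hg as [H1 [H2 H3]]. destruct (IH a ltac:(lra) H3) as [A B].
  split; [split|split]; auto.
  apply ln_le; lra.
  rewrite <- (ln_exp 2). apply ln_le. lra. assert (H := exp_ineq1_le 2). lra.
Qed.

Lemma Agrid_good : good 1 Agrid.
Proof. unfold Agrid; simpl; repeat split; lra. Qed.

Lemma S0_ge : 1/2 <= rsum g4 0 (List.map ln Agrid).
Proof.
  rewrite <- ln_1. apply Rle_trans with (qsum 1 Agrid). apply qsum_num.
  apply qsum_rsum. lra. apply Agrid_good.
Qed.
Lemma sinh_scale s x : 0 <= s <= 1 -> 0 <= x -> sinh (s * x) <= s * sinh x.
Proof.
  intros Hs Hx.
  set (G := fun t => s * sinh t - sinh (s * t)).
  assert (HD : forall t, is_derive G t (s * cosh t - s * cosh (s * t))).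
  { intros t. unfold G, sinh, cosh. auto_derive. auto. field. }
  destruct (MVT_gen G 0 x (fun t => s * cosh t - s * cosh (s * t))) as [c [Hc E]].
  - intros t _. apply HD.
  - intros t _. apply continuity_pt_filterlim.
    apply (@ex_derive_continuous R_AbsRing R_NormedModule). eexists; apply HD.
  - rewrite Rmin_left, Rmax_right in Hc by lra.
    assert (cosh (s * c) <= cosh c) by (apply cosh_mono; split; nra).
    unfold G in E. rewrite Rmult_0_r, sinh_0 in E.
    assert (0 <= s * (cosh c - cosh (s * c)) * (x - 0)) by (apply Rmult_le_pos; nra).
    lra.
Qed.

Lemma cosh_half u : cosh u - 1 = 2 * sinh (u / 2) ^ 2.
Proof.
  unfold cosh, sinh. rewrite !exp_Ropp.
  replace (exp u) with (exp (u/2) * exp (u/2)) by (rewrite <- exp_plus; f_equal; lra).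
  field. apply Rgt_not_eq, exp_pos.
Qed.

Lemma sinh_nonneg v : 0 <= v -> 0 <= sinh v.
Proof.
  intros H. unfold sinh. assert (exp (- v) <= exp v).
  { destruct (Req_dec v 0) as [->|E]. rewrite Ropp_0; lra. left; apply exp_increasing; lra. }
  lra.
Qed.

Lemma cosh_scale s y : 0 <= s <= 1 -> 0 <= y -> cosh (s * y) - 1 <= s ^ 2 * (cosh y - 1).
Proof.
  intros Hs Hy. rewrite !cosh_half.
  replace (s * y / 2) with (s * (y / 2)) by field.
  assert (H1 := sinh_scale s (y/2) Hs ltac:(lra)).
  assert (H0 := sinh_nonneg (s * (y/2)) ltac:(nra)).
  assert (sinh (s * (y / 2)) ^ 2 <= (s * sinh (y/2)) ^ 2) by (apply pow_incr; lra).
  replace ((s * sinh (y/2))^2) with (s^2 * sinh (y/2)^2) in H by ring. nra.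
Qed.
Lemma scaled_ge nu z l b : 0 <= nu -> 0 < z -> 0 <= b -> sortedf 0 l -> allle b l ->
  rsum (fun t => exp (- z * (cosh t - 1))) 0 l <= BesselK_scaled nu z.
Proof.
  intros Hn Hz Hb Hs Ha. unfold BesselK_scaled.
  rewrite (rsum_ext _ (fun t => exp z * exp (- z * cosh t))).
  2:{ intros t. rewrite <- exp_plus. f_equal. ring. }
  rewrite rsum_scale. apply Rmult_le_compat_l. left; apply exp_pos.
  apply Rle_trans with (RInt (kf nu z) 0 b).
  apply rsum_RInt; auto; lra. apply BesselK_ge; auto.
Qed.

Theorem proposition5 (P U L : Z) :
  (1 <= P)%Z -> (0 <= U)%Z -> IZR L <= - (IZR U + 1) / 2 ->
  forall nu z : R, 0 <= nu -> 0 < z -> z <= B_OFL P U ->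
  powerRZ 2 L <= BesselK_scaled nu z.
Proof.
  intros HP HU HL nu z Hn Hz HzB.
  assert (HU' : 0 <= IZR U) by (apply IZR_le; lia).
  destruct (good_sorted Agrid 1 ltac:(lra) Agrid_good) as [Hs Ha]. rewrite ln_1 in Hs.
  assert (HS := S0_ge).
  assert (HT : z <= powerRZ 2 (U + 1)).
  { unfold B_OFL in HzB. assert (H1 := powerRZ_lt 2 (- P) ltac:(lra)).
    assert (H2 := powerRZ_lt 2 (U + 1) ltac:(lra)). nra. }
  rewrite powerRZ_Rpower by lra.
  destruct (Rle_lt_dec z 4) as [Hz4|Hz4].
  -
    assert (HLm : (L <= -1)%Z).
    { assert (IZR L < 0) by lra. apply lt_IZR in H. lia. }
    apply Rle_trans with (Rpower 2 (-1)).
    { apply Rle_Rpower. lra. replace (-1) with (IZR (-1)) by reflexivity. apply IZR_le; lia. }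
    replace (Rpower 2 (-1)) with (/ Rpower 2 1) by (rewrite <- Rpower_Ropp; f_equal; ring).
    rewrite Rpower_1 by lra.
    apply Rle_trans with (rsum g4 0 (List.map ln Agrid)). lra.
    apply Rle_trans with (rsum (fun t => exp (- z * (cosh t - 1))) 0 (List.map ln Agrid)).
    2:{ apply (scaled_ge nu z _ 2); auto; lra. }
    apply rsum_mono; auto. lra. intros x Hx. unfold g4.
    assert (H1 := cosh_ge1 x).
    destruct (Req_dec (- 4 * (cosh x - 1)) (- z * (cosh x - 1))) as [E|E]. rewrite E; lra.
    left; apply exp_increasing. nra.
  -
    set (s := 2 / sqrt z).
    assert (Hsz : 0 < sqrt z) by (apply sqrt_lt_R0; lra).
    assert (Hsq := sqrt_sqrt z ltac:(lra)).
    assert (Hs2 : 2 < sqrt z).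
    { apply Rnot_le_lt. intros Hc. assert (sqrt z * sqrt z <= 2 * 2) by (apply Rmult_le_compat; lra). lra. }
    assert (Hs0 : 0 < s) by (unfold s; apply Rdiv_lt_0_compat; lra).
    assert (Hs1 : s <= 1).
    { unfold s. apply Rmult_le_reg_r with (sqrt z). lra. unfold Rdiv. rewrite Rmult_assoc, Rinv_l by lra. lra. }
    assert (Hzs : z * s ^ 2 = 4). { unfold s. replace (z * (2 / sqrt z)^2) with (4 * z / (sqrt z * sqrt z)) by (field; lra). rewrite Hsq. field. lra. }
    assert (Hpow : Rpower 2 (IZR L) <= s / 2).
    { apply Rle_trans with (Rpower 2 (- ((IZR U + 1) / 2))).
      { apply Rle_Rpower. lra. lra. }
      rewrite Rpower_Ropp.
      replace ((IZR U + 1) / 2) with ((IZR U + 1) * / 2) by (unfold Rdiv; ring).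
      rewrite <- Rpower_mult, Rpower_sqrt.
      2:{ apply exp_pos. }
      replace (IZR U + 1) with (IZR (U + 1)) by (rewrite plus_IZR; reflexivity).
      rewrite <- powerRZ_Rpower by lra.
      assert (sqrt z <= sqrt (powerRZ 2 (U + 1))) by (apply sqrt_le_1_alt; lra).
      replace (s / 2) with (/ sqrt z) by (unfold s; field; lra).
      apply Rinv_le_contravar; lra. }
    apply Rle_trans with (s / 2). exact Hpow.
    apply Rle_trans with (s * rsum g4 0 (List.map ln Agrid)).
    { replace (s/2) with (s * (1/2)) by field. apply Rmult_le_compat_l; lra. }
    apply Rle_trans with (rsum (fun t => exp (- z * (cosh t - 1))) (s * 0) (List.map (fun y => s * y) (List.map ln Agrid))).
    2:{ rewrite Rmult_0_r. apply (scaled_ge nu z _ (s * 2)); auto. nra.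
        rewrite <- (Rmult_0_r s). apply sortedf_map; auto; lra.
        apply allle_map; auto; lra. }
    rewrite rsum_map. apply Rmult_le_compat_l. lra.
    apply rsum_mono; auto. lra. intros y Hy. unfold g4.
    assert (H1 := cosh_scale s y ltac:(lra) Hy).
    assert (H2 : z * (cosh (s * y) - 1) <= 4 * (cosh y - 1)).
    { rewrite <- Hzs. assert (H3 := cosh_ge1 y). nra. }
    destruct (Req_dec (- 4 * (cosh y - 1)) (- z * (cosh (s * y) - 1))) as [E|E]. rewrite E; lra.
    left; apply exp_increasing. lra.
Qed.
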